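(* The set $\mathcal{L}_3$ of lines which meet $\mathcal{C}$ in exactly one point, are contained in an osculating plane of $\mathcal{C}$, and are not tangent lines of $\mathcal{C}$, is a single $G$-orbit, and every $\ell\in\mathcal{L}_3$ satisfies $OD_2(\ell)=OD_0(\ell)=[1,1,\tfrac{q-1}{2},\tfrac{q-1}{2},0]$.
   Context: Let $q$ be a power of a prime $p$, with $p\neq 2,3$. In $\mathrm{PG}(3,q)$ with coordinates $(Y_0,\dots,Y_3)$, the twisted cubic is $\mathcal{C}=\{P(t)=(1,t,t^2,t^3):t\in\mathbb{F}_q\}\cup\{P(\infty)=(0,0,0,1)\}$. $G\le \mathrm{PGL}(4,q)$ is the image of $\mathrm{PGL}(2,q)$ under the map sending the matrix $\begin{pmatrix}a&b\\c&d\end{pmatrix}$ to $\begin{pmatrix} a^3&a^2b&ab^2&b^3\\ 3a^2c&a^2d+2abc&b^2c+2abd&3b^2d\\ 3ac^2&bc^2+2acd&ad^2+2bcd&3bd^2\\ c^3&c^2d&cd^2&d^3\end{pmatrix}$. Osculating planes: $\Pi(t):-t^3Y_0+3t^2Y_1-3tY_2+Y_3=0$ ($t\in\mathbb{F}_q$), $\Pi(\infty):Y_0=0$. Tangent line at $P\in\mathcal{C}$: the line through $P$ meeting $\mathcal{C}$ with multiplicity two at $P$. Point classes: $\mathcal{P}_1$ = points of $\mathcal{C}$; $\mathcal{P}_2$ = points not on $\mathcal{C}$ on a tangent line; $\mathcal{P}_3$ = points not on $\mathcal{C}$ on exactly three osculating planes; $\mathcal{P}_4$ = points not on $\mathcal{C}$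 on exactly one osculating plane; $\mathcal{P}_5$ = points on no osculating plane. Plane classes: $\mathcal{H}_1$ = osculating planes; $\mathcal{H}_2$ = planes meeting $\mathcal{C}$ in exactly two points; $\mathcal{H}_3$ = exactly three points; $\mathcal{H}_4$ = non-osculating planes meeting $\mathcal{C}$ in exactly one point; $\mathcal{H}_5$ = planes disjoint from $\mathcal{C}$. $OD_0(\ell)$ (resp. $OD_2(\ell)$) is the list of the numbers of points of $\ell$ in $\mathcal{P}_1,\dots,\mathcal{P}_5$ (resp. planes through $\ell$ in $\mathcal{H}_1,\dots,\mathcal{H}_5$). *)

(* Defs.v *)
From HB Require Import structures.
From mathcomp Require Import all_boot all_order all_algebra.
Set Implicit Arguments. Unset Strict Implicit. Unset Printing Implicit Defensive.
Import GRing.Theory.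
Local Open Scope ring_scope.

(* PG(3,q) over a finite field F (q = #|F|).  A projective subspace of
   (projective) dimension k-1 is represented canonically by the square
   matrix <<S>>%MS whose row space is the corresponding k-dimensional
   vector subspace of F^4 (row vectors). *)

Section TwistedCubic.
Variable F : finFieldType.

Definition is_subsp (k : nat) (S : 'M[F]_4) : bool :=
  (<<S>>%MS == S) && (\rank S == k).

Definition points : {set 'M[F]_4} := [set S | is_subsp 1 S].
Definition lines  : {set 'M[F]_4} := [set S | is_subsp 2 S].
Definition planes : {set 'M[F]_4} := [set S | is_subsp 3 S].

Definition incid (A B : 'M[F]_4) : bool := (A <= B)%MS.

(* parameters: Some t = t in F, None = infinity *)
Definition cvec (t : F) : 'rV[F]_4 := \row_(i < 4) t ^+ i.
Definition cvec_inf : 'rV[F]_4 := \row_(i < 4) (if i == 3 :> nat then 1 else 0).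

Definition cpt (t : option F) : 'M[F]_4 :=
  match t with Some t => <<cvec t>>%MS | None => <<cvec_inf>>%MS end.

Definition curve : {set 'M[F]_4} := [set cpt t | t : option F].

(* osculating planes, given by their linear equation (column vector a:
   plane = { Y | Y *m a = 0 }) *)
Definition osc_fun (t : option F) : 'cV[F]_4 :=
  match t with
  | Some t => \col_(i < 4) nth 0 [:: - t ^+ 3; 3%:R * t ^+ 2; - (3%:R * t); 1] i
  | None => \col_(i < 4) (if i == 0 :> nat then 1 else 0)
  end.

Definition osc (t : option F) : 'M[F]_4 := <<kermx (osc_fun t)>>%MS.
Definition oscs : {set 'M[F]_4} := [set osc t | t : option F].

(* tangent lines: spanned by P(t) and the derivative P'(t) = (0,1,2t,3t^2);
   at infinity (local parameter s = 1/t, P = (s^3,s^2,s,1)) spanned by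
   (0,0,0,1) and (0,0,1,0). *)
Definition dcvec (t : F) : 'rV[F]_4 := \row_(i < 4) (i%:R * t ^+ i.-1).
Definition dcvec_inf : 'rV[F]_4 := \row_(i < 4) (if i == 2 :> nat then 1 else 0).

Definition tangent (t : option F) : 'M[F]_4 :=
  match t with
  | Some t => <<col_mx (cvec t) (dcvec t)>>%MS
  | None => <<col_mx cvec_inf dcvec_inf>>%MS
  end.
Definition tangents : {set 'M[F]_4} := [set tangent t | t : option F].

Definition nosc (P : 'M[F]_4) : nat := #|[set H in oscs | incid P H]|.
Definition ncurve (S : 'M[F]_4) : nat := #|[set P in curve | incid P S]|.

Definition PC1 : {set 'M[F]_4} := curve.
Definition PC2 : {set 'M[F]_4} :=
  [set P in points | (P \notin curve) && [exists t, incid P (tangent t)]].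
Definition PC3 : {set 'M[F]_4} :=
  [set P in points | (P \notin curve) && (nosc P == 3)%N].
Definition PC4 : {set 'M[F]_4} :=
  [set P in points | (P \notin curve) && (nosc P == 1)%N].
Definition PC5 : {set 'M[F]_4} := [set P in points | nosc P == 0%N].

Definition HC1 : {set 'M[F]_4} := oscs.
Definition HC2 : {set 'M[F]_4} := [set H in planes | ncurve H == 2%N].
Definition HC3 : {set 'M[F]_4} := [set H in planes | ncurve H == 3%N].
Definition HC4 : {set 'M[F]_4} :=
  [set H in planes | (H \notin oscs) && (ncurve H == 1)%N].
Definition HC5 : {set 'M[F]_4} := [set H in planes | ncurve H == 0%N].

Definition OD0 (l : 'M[F]_4) : seq nat :=
  [seq #|[set P in X | incid P l]| | X : {set 'M[F]_4} <- [:: PC1; PC2; PC3; PC4; PC5]].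
Definition OD2 (l : 'M[F]_4) : seq nat :=
  [seq #|[set H in X | incid l H]| | X : {set 'M[F]_4} <- [:: HC1; HC2; HC3; HC4; HC5]].

(* the group G: image of PGL(2,q); g = (a,b,c,d) with ad - bc != 0 *)
Definition gmx_abcd (a b c d : F) : 'M[F]_4 :=
  \matrix_(i < 4, j < 4) nth 0 (nth [::]
    [:: [:: a ^+ 3; a ^+ 2 * b; a * b ^+ 2; b ^+ 3];
        [:: 3%:R * a ^+ 2 * c; a ^+ 2 * d + 2%:R * a * b * c;
            b ^+ 2 * c + 2%:R * a * b * d; 3%:R * b ^+ 2 * d];
        [:: 3%:R * a * c ^+ 2; b * c ^+ 2 + 2%:R * a * c * d;
            a * d ^+ 2 + 2%:R * b * c * d; 3%:R * b * d ^+ 2];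
        [:: c ^+ 3; c ^+ 2 * d; c * d ^+ 2; d ^+ 3]] i) j.

Definition gmx (g : F * F * F * F) : 'M[F]_4 :=
  gmx_abcd g.1.1.1 g.1.1.2 g.1.2 g.2.

Definition Gset : {set F * F * F * F} :=
  [set g | g.1.1.1 * g.2 - g.1.1.2 * g.1.2 != 0].

Definition gact (g : F * F * F * F) (S : 'M[F]_4) : 'M[F]_4 :=
  <<S *m gmx g>>%MS.

Definition L3 : {set 'M[F]_4} :=
  [set l in lines | [&& ncurve l == 1%N, [exists t, incid l (osc t)]
                     & l \notin tangents]].

End TwistedCubic.

(* Main.v *)
Require Import Defs.
From HB Require Import structures.
From mathcomp Require Import all_boot all_order all_algebra.
From mathcomp Require Import ring.
Set Implicit Arguments. Unset Strict Implicit. Unset Printing Implicit Defensive.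
Import GRing.Theory.
Local Open Scope ring_scope.

Section Main.
Variable F : finFieldType.
Hypothesis h2 : (2%:R : F) != 0.
Hypothesis h3 : (3%:R : F) != 0.

Definition canon (S : 'M[F]_4) := (<<S>>%MS == S).

Lemma canon_gen m (S : 'M[F]_(m,4)) : canon <<S>>%MS.
Proof. by rewrite /canon genmx_id. Qed.

Lemma canon_eq (A B : 'M[F]_4) : canon A -> canon B -> (A <= B)%MS ->
  (\rank B <= \rank A)%N -> A = B.
Proof.
move=> /eqP cA /eqP cB sAB rBA.
have := geq_leqif (mxrank_leqif_eq sAB); rewrite rBA => /esym /genmxP eAB.
by rewrite -cA eAB cB.
Qed.

Definition gm (a b c d : F) := gmx_abcd a b c d.

Lemma gmx_mul (a b c d a' b' c' d' : F) :
  gmx_abcd a b c d *m gmx_abcd a' b' c' d' =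
  gmx_abcd (a*a'+b*c') (a*b'+b*d') (c*a'+d*c') (c*b'+d*d').
Proof.
apply/matrixP => i j; rewrite !mxE !big_ord_recl big_ord0 !mxE /=.
case: i => [[|[|[|[|i]]]] hi] //=; case: j => [[|[|[|[|j]]]] hj] //=; ring.
Qed.

Lemma gmx_scal (e : F) : gmx_abcd e 0 0 e = (e ^+ 3) *: 1%:M.
Proof.
apply/matrixP => i j; rewrite !mxE.
case: i => [[|[|[|[|i]]]] hi] //=; case: j => [[|[|[|[|j]]]] hj] //=; ring.
Qed.

Lemma gmx_adj (a b c d : F) :
  gmx_abcd a b c d *m gmx_abcd d (-b) (-c) a = ((a*d - b*c) ^+ 3) *: 1%:M.
Proof.
rewrite gmx_mul -gmx_scal; congr gmx_abcd; ring.
Qed.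


Definition detg (g : F * F * F * F) := g.1.1.1 * g.2 - g.1.1.2 * g.1.2.
Definition adjg (g : F * F * F * F) : F * F * F * F :=
  (g.2, - g.1.1.2, - g.1.2, g.1.1.1).
Definition gmul (g h : F * F * F * F) : F * F * F * F :=
  let: (a, b, c, d) := g in let: (a', b', c', d') := h in
  (a*a'+b*c', a*b'+b*d', c*a'+d*c', c*b'+d*d').

Lemma inGset g : (g \in Gset F) = (detg g != 0).
Proof. by rewrite inE. Qed.

Lemma adj_Gset g : g \in Gset F -> adjg g \in Gset F.
Proof.
case: g => [[[a b] c] d]; rewrite !inGset /detg /=.
have -> : d * a - - b * - c = a * d - b * c by ring.
done.
Qed.

Lemma gmul_Gset g h : g \in Gset F -> h \in Gset F -> gmul g h \in Gset F.
Proof.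
case: g => [[[a b] c] d]; case: h => [[[a' b'] c'] d'].
rewrite !inGset /detg /= => H1 H2.
have -> : (a * a' + b * c') * (c * b' + d * d') - (a * b' + b * d') * (c * a' + d * c')
  = (a * d - b * c) * (a' * d' - b' * c') by ring.
by rewrite mulf_neq0.
Qed.

Lemma gmx_gmul g h : gmx g *m gmx h = gmx (gmul g h).
Proof.
case: g => [[[a b] c] d]; case: h => [[[a' b'] c'] d'].
by rewrite /gmx /= gmx_mul.
Qed.

Lemma gmx_adjg g : gmx g *m gmx (adjg g) = (detg g ^+ 3) *: 1%:M.
Proof.
case: g => [[[a b] c] d]; by rewrite /gmx /= gmx_adj.
Qed.

Lemma rank_gmx g : g \in Gset F -> \rank (gmx g) = 4%N.
Proof.
rewrite inGset => hg; apply/eqP; rewrite eqn_leq rank_leq_row /=.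
have h4 : \rank ((detg g ^+ 3) *: (1%:M : 'M[F]_4)) = 4%N.
  by rewrite (eqmx_scale _ (expf_neq0 3 hg)) mxrank1.
by have := mxrankM_maxl (gmx g) (gmx (adjg g)); rewrite gmx_adjg h4.
Qed.

Lemma gen_mul m (S : 'M[F]_(m,4)) (M : 'M[F]_4) : <<(<<S>> *m M)>>%MS = <<S *m M>>%MS.
Proof. by apply: eq_genmx; apply: eqmxMr; apply: genmxE. Qed.

Lemma gact_gact g h S : gact h (gact g S) = gact (gmul g h) S.
Proof. by rewrite /gact gen_mul -mulmxA gmx_gmul. Qed.

Lemma gact_canon g S : canon (gact g S).
Proof. exact: canon_gen. Qed.

Lemma gactK g S : g \in Gset F -> canon S -> gact (adjg g) (gact g S) = S.
Proof.
rewrite inGset => hg /eqP cS.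
rewrite /gact gen_mul -mulmxA gmx_adjg scalemx1 mul_mx_scalar.
by rewrite -{2}cS; apply: eq_genmx; apply: eqmx_scale; rewrite expf_neq0.
Qed.

Lemma rank_gact g S : g \in Gset F -> \rank (gact g S) = \rank S.
Proof.
move=> hg; rewrite /gact genmxE mxrankMfree //.
by rewrite /row_free rank_gmx.
Qed.

Lemma gact_sub g (A B : 'M[F]_4) : (A <= B)%MS -> (gact g A <= gact g B)%MS.
Proof. by move=> sAB; rewrite /gact !genmxE submxMr. Qed.

Lemma gact_inj g A B : g \in Gset F -> canon A -> canon B ->
  gact g A = gact g B -> A = B.
Proof.
move=> hg cA cB e; by rewrite -(gactK hg cA) e gactK.
Qed.

Lemma subsp_gact g k S : g \in Gset F -> is_subsp k S -> is_subsp k (gact g S).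
Proof.
move=> hg /andP[_ r]; apply/andP; split; first exact: gact_canon.
by rewrite rank_gact.
Qed.

Lemma subsp_canon k S : is_subsp k S -> canon S.
Proof. by case/andP. Qed.


Definition phi (g : F * F * F * F) (t : option F) : option F :=
  let: (a, b, c, d) := g in
  match t with
  | Some t => if a + c * t == 0 then None else Some ((b + d * t) / (a + c * t))
  | None => if c == 0 then None else Some (d / c)
  end.

Definition cv (t : option F) : 'rV[F]_4 :=
  match t with Some t => cvec t | None => cvec_inf F end.
Definition dv (t : option F) : 'rV[F]_4 :=
  match t with Some t => dcvec t | None => dcvec_inf F end.

Lemma cptE t : cpt t = <<cv t>>%MS.
Proof. by case: t. Qed.
Lemma tangentE t : tangent t = <<col_mx (cv t) (dv t)>>%MS.
Proof. by case: t. Qed.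

Ltac rowcomp := apply/rowP; case=> [[|[|[|[|?]]]] ?];
  rewrite !mxE ?big_ord_recl ?big_ord0 ?mxE //=; rewrite ?mxE /= ?/bump /=.
Ltac colcomp := apply/colP; case=> [[|[|[|[|?]]]] ?];
  rewrite !mxE ?big_ord_recl ?big_ord0 ?mxE //=; rewrite ?mxE /= ?/bump /=.

Lemma cv_gmx g t : g \in Gset F ->
  exists2 l, l != 0 & cv t *m gmx g = l *: cv (phi g t).
Proof.
case: g => [[[a b] c] d]; rewrite inGset /detg /gmx /= => hdet.
case: t => [t|] /=.
  have [e|e] := eqVneq (a + c * t) 0; rewrite ?e ?eqxx ?(negbTE e).
    have ea : a = - (c * t) by rewrite -(subr0 a) -e; ring.
    subst a.
    have hf : b + d * t != 0.
      apply: contraNneq hdet => hf.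
      have -> : - (c * t) * d - b * c = - c * (b + d * t) by ring.
      by rewrite hf mulr0.
    exists ((b + d * t) ^+ 3); first by rewrite expf_neq0.
    rowcomp; ring.
  exists ((a + c * t) ^+ 3); first by rewrite expf_neq0.
  rowcomp; by field.
have [e|e] := eqVneq c 0; rewrite ?e ?eqxx ?(negbTE e).
  subst c.
  have hd : d != 0 by apply: contraNneq hdet => ->; rewrite mulr0 mulr0 subr0.
  exists (d ^+ 3); first by rewrite expf_neq0.
  rowcomp; ring.
exists (c ^+ 3); first by rewrite expf_neq0.
rowcomp; by field.
Qed.


Lemma dv_gmx g t : g \in Gset F ->
  exists al be, dv t *m gmx g = al *: cv (phi g t) + be *: dv (phi g t).
Proof.
case: g => [[[a b] c] d]; rewrite inGset /detg /gmx /= => hdet.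
case: t => [t|] /=.
  have [e|e] := eqVneq (a + c * t) 0; rewrite ?e ?eqxx ?(negbTE e).
    have ea : a = - (c * t) by rewrite -(subr0 a) -e; ring.
    subst a.
    exists (3%:R * d * (b + d * t) ^+ 2), (c * (b + d * t) ^+ 2).
    rowcomp; ring.
  exists (3%:R * c * (a + c * t) ^+ 2), ((a * d - b * c) * (a + c * t)).
  rowcomp; by field.
have [e|e] := eqVneq c 0; rewrite ?e ?eqxx ?(negbTE e).
  subst c.
  exists (3%:R * b * d ^+ 2), (a * d ^+ 2).
  rowcomp; ring.
exists (3%:R * a * c ^+ 2), (b * c ^+ 2 - a * c * d).
rowcomp; by field.
Qed.

Lemma osc_gmx g t : g \in Gset F ->
  exists l, gmx g *m osc_fun (phi g t) = l *: osc_fun t.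
Proof.
case: g => [[[a b] c] d]; rewrite inGset /detg /gmx /= => hdet.
case: t => [t|] /=.
  have [e|e] := eqVneq (a + c * t) 0; rewrite ?e ?eqxx ?(negbTE e).
    have ea : a = - (c * t) by rewrite -(subr0 a) -e; ring.
    subst a.
    exists (c ^+ 3).
    colcomp; ring.
  exists (((a * d - b * c) / (a + c * t)) ^+ 3).
  colcomp; by field.
have [e|e] := eqVneq c 0; rewrite ?e ?eqxx ?(negbTE e).
  subst c.
  exists (a ^+ 3).
  colcomp; ring.
exists (- ((a * d - b * c) / c) ^+ 3).
colcomp; by field.
Qed.


Lemma gen_scale m (A B : 'M[F]_(m,4)) l : l != 0 -> A = l *: B -> <<A>>%MS = <<B>>%MS.
Proof. by move=> hl ->; apply: eq_genmx; apply: eqmx_scale. Qed.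

Lemma gact_cpt g t : g \in Gset F -> gact g (cpt t) = cpt (phi g t).
Proof.
move=> hg; rewrite !cptE /gact gen_mul.
by have [l hl ->] := cv_gmx t hg; apply: gen_scale hl _.
Qed.

Lemma sub_colmx_l m1 m2 (A : 'M[F]_(m1,4)) (B : 'M[F]_(m2,4)) : (A <= col_mx A B)%MS.
Proof. by have := submx_refl (col_mx A B); rewrite col_mx_sub => /andP[]. Qed.
Lemma sub_colmx_r m1 m2 (A : 'M[F]_(m1,4)) (B : 'M[F]_(m2,4)) : (B <= col_mx A B)%MS.
Proof. by have := submx_refl (col_mx A B); rewrite col_mx_sub => /andP[]. Qed.

Lemma gact_tangent g t : g \in Gset F ->
  (gact g (tangent t) <= tangent (phi g t))%MS.
Proof.
move=> hg; rewrite !tangentE /gact gen_mul !genmxE mul_col_mx col_mx_sub.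
have [l hl ->] := cv_gmx t hg; have [al [be ->]] := dv_gmx t hg.
rewrite scalemx_sub ?sub_colmx_l //.
by rewrite addmx_sub // scalemx_sub ?sub_colmx_l ?sub_colmx_r.
Qed.

Lemma sub_osc m (A : 'M[F]_(m,4)) t : (A <= osc t)%MS = (A *m osc_fun t == 0).
Proof. by rewrite /osc genmxE sub_kermx. Qed.

Lemma osc_fun_neq0 (t : option F) : osc_fun t != 0.
Proof.
apply/negP => /eqP h.
case: t h => [t|] h.
  by have := congr1 (fun M : 'cV[F]_4 => M 3 0) h; rewrite !mxE /= => /eqP; rewrite oner_eq0.
by have := congr1 (fun M : 'cV[F]_4 => M 0 0) h; rewrite !mxE /= => /eqP; rewrite oner_eq0.
Qed.

Lemma rank_osc (t : option F) : \rank (osc t) = 3%N.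
Proof.
rewrite /osc genmxE mxrank_ker.
suff -> : \rank (osc_fun t) = 1%N by [].
apply/eqP; rewrite eqn_leq rank_leq_col lt0n mxrank_eq0 osc_fun_neq0.
by [].
Qed.

Lemma canon_osc (t : option F) : canon (osc t).
Proof. exact: canon_gen. Qed.
Lemma canon_cpt (t : option F) : canon (cpt t).
Proof. rewrite cptE; exact: canon_gen. Qed.
Lemma canon_tangent (t : option F) : canon (tangent t).
Proof. rewrite tangentE; exact: canon_gen. Qed.

Lemma gact_osc g t : g \in Gset F -> gact g (osc t) = osc (phi g t).
Proof.
move=> hg; apply: canon_eq; [exact: gact_canon|exact: canon_osc| |].
  rewrite /gact genmxE sub_osc -mulmxA.
  have [l ->] := osc_gmx t hg.
  by rewrite -scalemxAr (eqP (_ : osc t *m osc_fun t == 0)) ?scaler0 // -sub_osc.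
by rewrite rank_gact // !rank_osc.
Qed.


Definition ginv (X : {set 'M[F]_4}) :=
  forall h A, h \in Gset F -> A \in X -> gact h A \in X.
Definition allcanon (X : {set 'M[F]_4}) := forall A, A \in X -> canon A.
Definition rinv (R : 'M[F]_4 -> 'M[F]_4 -> bool) :=
  forall h A C, h \in Gset F -> R A C -> R (gact h A) (gact h C).

Lemma card_gact_le X R g B : g \in Gset F -> ginv X -> allcanon X -> rinv R ->
  (#|[set A in X | R A B]| <= #|[set A in X | R A (gact g B)]|)%N.
Proof.
move=> hg gX cX rR.
rewrite -(card_in_imset (f := gact g)); last first.
  move=> A C; rewrite !inE => /andP[/cX cA _] /andP[/cX cC _].
  exact: gact_inj.
apply: subset_leq_card; apply/subsetP => A' /imsetP[A]; rewrite !inE => /andP[AX RA] ->.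
by rewrite gX // rR.
Qed.

Lemma card_gact X R g B : g \in Gset F -> canon B -> ginv X -> allcanon X -> rinv R ->
  #|[set A in X | R A (gact g B)]| = #|[set A in X | R A B]|.
Proof.
move=> hg cB gX cX rR; apply/eqP; rewrite eqn_leq card_gact_le // andbT.
have := card_gact_le (gact g B) (adj_Gset hg) gX cX rR.
by rewrite gactK.
Qed.

Lemma inv_rev X h A : ginv X -> h \in Gset F -> canon A -> gact h A \in X -> A \in X.
Proof.
move=> gX hh cA hA; rewrite -(gactK hh cA); exact: gX (adj_Gset hh) hA.
Qed.

Lemma rinv_incid : rinv (@incid F).
Proof. move=> h A C _; exact: gact_sub. Qed.
Lemma rinv_incid' : rinv (fun A B => incid B A).
Proof. move=> h A C _; exact: gact_sub. Qed.

Lemma ginv_curve : ginv (curve F).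
Proof.
move=> h A hh /imsetP[t _ ->]; rewrite gact_cpt //; exact: imset_f.
Qed.
Lemma canon_curve : allcanon (curve F).
Proof. by move=> A /imsetP[t _ ->]; exact: canon_cpt. Qed.

Lemma ginv_oscs : ginv (oscs F).
Proof.
move=> h A hh /imsetP[t _ ->]; rewrite gact_osc //; exact: imset_f.
Qed.
Lemma canon_oscs : allcanon (oscs F).
Proof. by move=> A /imsetP[t _ ->]; exact: canon_osc. Qed.

Lemma ncurve_gact g S : g \in Gset F -> canon S -> ncurve (gact g S) = ncurve S.
Proof.
move=> hg cS; rewrite /ncurve.
exact: (card_gact (R := @incid F)) hg cS ginv_curve canon_curve rinv_incid.
Qed.

Lemma nosc_gact g S : g \in Gset F -> canon S -> nosc (gact g S) = nosc S.
Proof.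
move=> hg cS; rewrite /nosc.
exact: (card_gact (R := fun A B => incid B A)) hg cS ginv_oscs canon_oscs rinv_incid'.
Qed.


Lemma ginv_PC2 : ginv (PC2 F).
Proof.
move=> h A hh; rewrite !inE => /and3P[pA nA /existsP[t At]].
have cA : canon A by move: pA; rewrite ?inE => /subsp_canon.
rewrite ?inE subsp_gact //=.
apply/andP; split.
  by apply: contra nA => hc; exact: (inv_rev ginv_curve hh cA hc).
apply/existsP; exists (phi h t).
exact: submx_trans (gact_sub h At) (gact_tangent t hh).
Qed.

Lemma ginv_PCn k (X : {set 'M[F]_4}) :
  X = [set P in points F | (P \notin curve F) && (nosc P == k)] -> ginv X.
Proof.
move=> -> h A hh; rewrite !inE => /and3P[pA nA nk].
have cA : canon A by move: pA; rewrite ?inE => /subsp_canon.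
rewrite ?inE subsp_gact //=.
rewrite nosc_gact // nk andbT.
by apply: contra nA => hc; exact: (inv_rev ginv_curve hh cA hc).
Qed.

Lemma ginv_PC5 : ginv (PC5 F).
Proof.
move=> h A hh; rewrite !inE => /andP[pA nk].
have cA : canon A by move: pA; rewrite ?inE => /subsp_canon.
rewrite ?inE subsp_gact //=.
by rewrite nosc_gact.
Qed.

Lemma ginv_HCn k (X : {set 'M[F]_4}) :
  X = [set H in planes F | ncurve H == k] -> ginv X.
Proof.
move=> -> h A hh; rewrite !inE => /andP[pA nk].
have cA : canon A by move: pA; rewrite ?inE => /subsp_canon.
rewrite ?inE subsp_gact //=.
by rewrite ncurve_gact.
Qed.

Lemma ginv_HC4 : ginv (HC4 F).
Proof.
move=> h A hh; rewrite !inE => /and3P[pA nA nk].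
have cA : canon A by move: pA; rewrite ?inE => /subsp_canon.
rewrite ?inE subsp_gact //=.
rewrite ncurve_gact // nk andbT.
by apply: contra nA => hc; exact: (inv_rev ginv_oscs hh cA hc).
Qed.

Lemma canon_sub_points (X : {set 'M[F]_4}) k :
  {subset X <= [set P | is_subsp k P]} -> allcanon X.
Proof. by move=> sX A /sX; rewrite inE => /subsp_canon. Qed.

Lemma canon_PC2 : allcanon (PC2 F).
Proof. by apply: (@canon_sub_points _ 1) => A; rewrite !inE => /andP[]. Qed.
Lemma canon_PC3 : allcanon (PC3 F).
Proof. by apply: (@canon_sub_points _ 1) => A; rewrite !inE => /andP[]. Qed.
Lemma canon_PC4 : allcanon (PC4 F).
Proof. by apply: (@canon_sub_points _ 1) => A; rewrite !inE => /andP[]. Qed.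
Lemma canon_PC5 : allcanon (PC5 F).
Proof. by apply: (@canon_sub_points _ 1) => A; rewrite !inE => /andP[]. Qed.
Lemma canon_HC2 : allcanon (HC2 F).
Proof. by apply: (@canon_sub_points _ 3) => A; rewrite !inE => /andP[]. Qed.
Lemma canon_HC3 : allcanon (HC3 F).
Proof. by apply: (@canon_sub_points _ 3) => A; rewrite !inE => /andP[]. Qed.
Lemma canon_HC4 : allcanon (HC4 F).
Proof. by apply: (@canon_sub_points _ 3) => A; rewrite !inE => /andP[]. Qed.
Lemma canon_HC5 : allcanon (HC5 F).
Proof. by apply: (@canon_sub_points _ 3) => A; rewrite !inE => /andP[]. Qed.

Lemma OD0_gact g l : g \in Gset F -> canon l -> OD0 (gact g l) = OD0 l.
Proof.
move=> hg cl; rewrite /OD0 /=.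
have E := fun X gX cX => card_gact (X := X) (R := @incid F) hg cl gX cX rinv_incid.
rewrite (E _ ginv_curve canon_curve) (E _ ginv_PC2 canon_PC2).
rewrite (E _ (ginv_PCn (k := 3) (erefl _)) canon_PC3).
rewrite (E _ (ginv_PCn (k := 1) (erefl _)) canon_PC4).
by rewrite (E _ ginv_PC5 canon_PC5).
Qed.

Lemma OD2_gact g l : g \in Gset F -> canon l -> OD2 (gact g l) = OD2 l.
Proof.
move=> hg cl; rewrite /OD2 /=.
have E := fun X gX cX => card_gact (X := X) (R := fun A B => incid B A) hg cl gX cX rinv_incid'.
rewrite (E _ ginv_oscs canon_oscs).
rewrite (E _ (ginv_HCn (k := 2) (erefl _)) canon_HC2).
rewrite (E _ (ginv_HCn (k := 3) (erefl _)) canon_HC3).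
rewrite (E _ ginv_HC4 canon_HC4).
by rewrite (E _ (ginv_HCn (k := 0) (erefl _)) canon_HC5).
Qed.


Lemma L3_gact g l : g \in Gset F -> l \in L3 F -> gact g l \in L3 F.
Proof.
move=> hg; rewrite !inE => /and4P[ll nl /existsP[t lt] nt].
have cl : canon l by move: ll; rewrite ?inE => /subsp_canon.
rewrite subsp_gact // ncurve_gact // nl /=.
apply/andP; split.
  apply/existsP; exists (phi g t); rewrite /incid -gact_osc //; exact: gact_sub.
apply: contra nt => /imsetP[s _ es].
have hga := adj_Gset hg.
have sl : (l <= tangent (phi (adjg g) s))%MS.
  by rewrite -(gactK hg cl) es; apply: gact_tangent.
apply/imsetP; exists (phi (adjg g) s) => //.
apply: canon_eq => //; first exact: canon_tangent.
move: ll; rewrite ?inE => /andP[_ /eqP ->].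
by rewrite tangentE genmxE; apply: leq_trans (rank_leq_row _) _.
Qed.

Definition rv4 (x0 x1 x2 x3 : F) : 'rV[F]_4 :=
  \row_(i < 4) nth 0 [:: x0; x1; x2; x3] i.

Lemma rv4E (v : 'rV[F]_4) : v = rv4 (v 0 0) (v 0 1) (v 0 2) (v 0 3).
Proof.
apply/rowP; case=> [[|[|[|[|?]]]] ?]; rewrite mxE //=; by congr (v _ _); apply: val_inj.
Qed.

Lemma mx11_eq0 (A : 'M[F]_1) : (A == 0) = (A 0 0 == 0).
Proof.
apply/eqP/eqP => [->|h]; first by rewrite mxE.
by apply/matrixP => i j; rewrite !ord1 h mxE.
Qed.

Lemma cvec_infE : cvec_inf F = rv4 0 0 0 1.
Proof. by rowcomp. Qed.
Lemma dcvec_infE : dcvec_inf F = rv4 0 0 1 0.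
Proof. by rowcomp. Qed.

Lemma cvecE (t : F) : cvec t = rv4 1 t (t ^+ 2) (t ^+ 3).
Proof. rowcomp; ring. Qed.
Lemma dcvecE (t : F) : dcvec t = rv4 0 1 (2%:R * t) (3%:R * t ^+ 2).
Proof. rowcomp; ring. Qed.

Lemma vosc (x0 x1 x2 x3 : F) (t : option F) : (rv4 x0 x1 x2 x3 *m osc_fun t == 0) =
  (match t with Some t => - t ^+ 3 * x0 + 3%:R * t ^+ 2 * x1
          - 3%:R * t * x2 + x3 | None => x0 end == 0).
Proof.
rewrite mx11_eq0 !mxE !big_ord_recl big_ord0 !mxE /=.
case: t => [t|] /=; rewrite !mxE /= /bump /=.
  by congr (_ == _); ring.
by congr (_ == _); ring.
Qed.

Lemma cv_osc (t s : option F) : (cv t *m osc_fun s == 0) = (t == s).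
Proof.
case: t => [t|]; rewrite /= ?cvecE ?cvec_infE vosc; case: s => [s|] /=.
- have -> : - s ^+ 3 * 1 + 3%:R * s ^+ 2 * t - 3%:R * s * t ^+ 2 + t ^+ 3
    = (t - s) ^+ 3 by ring.
  by rewrite expf_eq0 /= subr_eq0.
- by rewrite oner_eq0.
- have -> : - s ^+ 3 * 0 + 3%:R * s ^+ 2 * 0 - 3%:R * s * 0 + 1 = 1 :> F by ring.
  by rewrite oner_eq0.
- by rewrite !eqxx.
Qed.

Lemma cpt_osc (t s : option F) : (cpt t <= osc s)%MS = (t == s).
Proof. by rewrite cptE genmxE sub_osc cv_osc. Qed.

Lemma osc_inj : injective (@osc F).
Proof.
move=> t s e; apply/eqP; rewrite -cpt_osc -e cpt_osc; exact: eqxx.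
Qed.

Lemma cpt_inj : injective (@cpt F).
Proof.
move=> t s e; apply/eqP; rewrite -cpt_osc e cpt_osc; exact: eqxx.
Qed.


Definition K0 : 'M[F]_(4,2) := \matrix_(i < 4, j < 2)
  (if ((i == 0 :> nat) && (j == 0 :> nat)) || ((i == 2 :> nat) && (j == 1 :> nat))
   then 1 else 0).
Definition l0 : 'M[F]_4 := <<kermx K0>>%MS.

Lemma sub_l0_rv x0 x1 x2 x3 : (rv4 x0 x1 x2 x3 <= l0)%MS = (x0 == 0) && (x2 == 0).
Proof.
rewrite /l0 genmxE sub_kermx.
apply/eqP/andP => [h|[/eqP e0 /eqP e2]].
  have := congr1 (fun M : 'rV[F]_2 => M 0 ord0) h.
  have := congr1 (fun M : 'rV[F]_2 => M 0 ord_max) h.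
  rewrite !mxE !big_ord_recl !big_ord0 !mxE /= /bump /= => a b.
  split; apply/eqP.
    by move: b; rewrite !(mulr0, mulr1, addr0, add0r).
  by move: a; rewrite !(mulr0, mulr1, addr0, add0r).
apply/rowP; case=> [[|[|?]] ?]; rewrite !mxE !big_ord_recl !big_ord0 !mxE //= /bump /=.
  by rewrite e0 !(mulr0, mulr1, addr0, add0r).
by rewrite e2 !(mulr0, mulr1, addr0, add0r).
Qed.

Lemma sub_l0 (v : 'rV[F]_4) : (v <= l0)%MS = (v 0 0 == 0) && (v 0 2 == 0).
Proof. by rewrite {1}[v]rv4E sub_l0_rv. Qed.

Lemma rank_K0 : \rank K0 = 2%N.
Proof.
apply/eqP; rewrite eqn_leq rank_leq_col /=.
have e : K0^T *m K0 = 1%:M.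
  apply/matrixP; case=> [[|[|?]] ?]; case=> [[|[|?]] ?];
  rewrite !mxE !big_ord_recl !big_ord0 !mxE //= /bump /=;
  by rewrite !(mulr0, mulr1, addr0, add0r).
by move: (mxrankM_maxr K0^T K0); rewrite e mxrank1.
Qed.

Lemma rank_l0 : \rank l0 = 2%N.
Proof. by rewrite /l0 genmxE mxrank_ker rank_K0. Qed.

Lemma canon_l0 : canon l0.
Proof. exact: canon_gen. Qed.

Lemma rowsP m (A B : 'M[F]_(m,4)) :
  (forall v : 'rV[F]_4, (v <= A)%MS -> (v <= B)%MS) -> (A <= B)%MS.
Proof. by move=> h; apply/row_subP => i; apply: h; apply: row_sub. Qed.

Lemma osc_None_rv x0 x1 x2 x3 : (rv4 x0 x1 x2 x3 <= osc None)%MS = (x0 == 0).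
Proof. by rewrite sub_osc vosc. Qed.

Lemma l0_osc : (l0 <= osc None)%MS.
Proof.
apply: rowsP => v; rewrite [v]rv4E sub_l0_rv osc_None_rv => /andP[] //.
Qed.

Lemma curve_l0 : [set P in curve F | incid P l0] = [set cpt None].
Proof.
apply/setP => P; rewrite !inE; apply/andP/eqP => [[/imsetP[t _ ->] tl]|->].
  have : (cpt t <= osc None)%MS := submx_trans tl l0_osc.
  by rewrite cpt_osc => /eqP ->.
split; first exact: imset_f.
by rewrite /incid cptE genmxE /= cvec_infE sub_l0_rv !eqxx.
Qed.

Lemma ncurve_l0 : ncurve l0 = 1%N.
Proof. by rewrite /ncurve curve_l0 cards1. Qed.

Lemma l0_L3 : l0 \in L3 F.
Proof.
have sl : is_subsp 2 l0 by apply/andP; split; [exact: canon_l0|rewrite rank_l0].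
rewrite !inE sl ncurve_l0 /=.
apply/andP; split; first by apply/existsP; exists None; exact: l0_osc.
apply/imsetP => -[t _ e].
case: t e => [t|] e.
  have : (cv (Some t) <= l0)%MS by rewrite e tangentE genmxE sub_colmx_l.
  by rewrite /= cvecE sub_l0_rv oner_eq0.
have : (dv None <= l0)%MS by rewrite e tangentE genmxE sub_colmx_r.
by rewrite /= dcvec_infE sub_l0_rv oner_eq0 andbF.
Qed.


Lemma rv4_sub_l0 (r : 'rV[F]_4) : (r <= l0)%MS -> r = rv4 0 (r 0 1) 0 (r 0 3).
Proof.
rewrite sub_l0 => /andP[/eqP a /eqP b]; rewrite {1}[r]rv4E a b //.
Qed.

Lemma orbit_step (l1 : 'M[F]_4) : canon l1 -> \rank l1 = 2%N ->
  (l1 <= osc None)%MS -> (cv None <= l1)%MS -> l1 != tangent None ->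
  exists2 g, g \in Gset F & l1 = gact g l0.
Proof.
move=> cl rl lo el nt.
have nT : ~~ (l1 <= tangent None)%MS.
  apply: contra nt => sT; apply/eqP; apply: canon_eq => //; first exact: canon_tangent.
  by rewrite rl tangentE genmxE; apply: leq_trans (rank_leq_row _) _.
have [i ni] := row_subPn nT.
set v := row i l1 in ni.
have vl : (v <= l1)%MS by exact: row_sub.
have vo : (v <= osc None)%MS := submx_trans vl lo.
move: ni vl vo; rewrite [v]rv4E.
move: (v 0 0) (v 0 1) (v 0 2) (v 0 3) => x0 x1 x2 x3 ni vl.
rewrite osc_None_rv => /eqP ex0; subst x0.
have x1n : x1 != 0.
  apply: contra ni => /eqP ex1; subst x1.
  rewrite tangentE genmxE.
  have -> : rv4 0 0 x2 x3 = x2 *: dv None + x3 *: cv None.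
    by rewrite /= dcvec_infE cvec_infE; rowcomp; ring.
  by rewrite addmx_sub // scalemx_sub ?sub_colmx_l ?sub_colmx_r.
set y := x2 / x1.
exists (1, y / 2%:R, 0, 1).
  by rewrite inGset /detg /= mulr1 mulr0 subr0 oner_eq0.
symmetry; apply: canon_eq; [exact: gact_canon|exact: cl| |by rewrite rank_gact ?rank_l0 ?rl //;
  rewrite inGset /detg /= mulr1 mulr0 subr0 oner_eq0].
rewrite /gact genmxE; apply/row_subP => j; rewrite row_mul.
have := row_sub j l0; move/rv4_sub_l0 ->.
move: (row j l0 0 1) (row j l0 0 3) => r1 r3.
have -> : rv4 0 r1 0 r3 *m gmx (1, y / 2%:R, 0, 1) =
  (r1 / x1) *: rv4 0 x1 x2 x3 + (r1 * (3%:R * (y / 2%:R) ^+ 2 - x3 / x1) + r3) *: cv None.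
  rewrite /= cvec_infE /gmx /=; rowcomp; rewrite /y; (field; by rewrite ?x1n ?h2).
by rewrite addmx_sub // scalemx_sub.
Qed.


Definition gt (t : option F) : F * F * F * F :=
  match t with Some t0 => (- t0, 1, 1, 0) | None => (1, 0, 0, 1) end.

Lemma gt_Gset t : gt t \in Gset F.
Proof.
rewrite inGset /gt /detg; case: t => [t0|] /=.
  by rewrite mulr0 mul1r sub0r oppr_eq0 oner_eq0.
by rewrite mulr1 mulr0 subr0 oner_eq0.
Qed.

Lemma phi_gt t : phi (gt t) t = None.
Proof. case: t => [t0|] /=; last by rewrite eqxx. by rewrite mul1r addNr eqxx. Qed.

Lemma L3_orbit l : l \in L3 F -> exists2 g, g \in Gset F & l = gact g l0.
Proof.
move=> lL; have := lL; rewrite !inE => /and4P[ll nl /existsP[t lt] nt].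
have cl : canon l by move: ll; rewrite ?inE => /subsp_canon.
pose g1 := gt t.
have hg1 : g1 \in Gset F by exact: gt_Gset.
have ph : phi g1 t = None by exact: phi_gt.
set l1 := gact g1 l.
have l1L : l1 \in L3 F by apply: L3_gact.
move: l1L; rewrite !inE => /and4P[ll1 nl1 _ nt1].
have cl1 : canon l1 by exact: gact_canon.
have lo : (l1 <= osc None)%MS by rewrite -ph -gact_osc //; apply: gact_sub.
have el : (cv None <= l1)%MS.
  have : (0 < ncurve l1)%N by rewrite (eqP nl1).
  rewrite /ncurve card_gt0 => /set0Pn[P]; rewrite !inE => /andP[/imsetP[u _ ->] ul].
  have := submx_trans ul lo; rewrite cpt_osc => /eqP eu; subst u.
  by move: ul; rewrite /incid cptE genmxE.
have [g2 hg2 e2] : exists2 g, g \in Gset F & l1 = gact g l0.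
  apply: orbit_step => //.
    by move: ll1; rewrite ?inE => /andP[_ /eqP].
  by apply: contra nt1 => /eqP ->; apply: imset_f.
exists (gmul g2 (adjg g1)); first by rewrite gmul_Gset ?adj_Gset.
by rewrite -gact_gact -e2 /l1 gactK.
Qed.


Definition sqset (c : F) := [set m : F | (m != 0) && [exists t, t ^+ 2 == c * m]].
Definition nsqset (c : F) := [set m : F | (m != 0) && ~~ [exists t, t ^+ 2 == c * m]].

Lemma neg_neq (t : F) : t != 0 -> t != - t.
Proof.
move=> ht; apply/negP => /eqP e.
have : 2%:R * t = 0 by rewrite mulr2n mulrDl mul1r {1}e addNr.
by move/eqP; rewrite mulf_eq0 (negbTE h2) (negbTE ht).
Qed.

Lemma roots2 (s : F) (t0 : F) : t0 != 0 -> t0 ^+ 2 = s ->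
  #|[set t | t ^+ 2 == s]| = 2%N.
Proof.
move=> ht <-.
have -> : [set t | t ^+ 2 == t0 ^+ 2] = [set t0; - t0].
  by apply/setP => t; rewrite !inE eqf_sqr.
by rewrite cards2 neg_neq.
Qed.

Lemma sq_count (c : F) : c != 0 -> #|sqset c|.*2 = #|F|.-1.
Proof.
move=> hc.
have -> : #|F|.-1 = (\sum_(t : F | t != 0%R) 1)%N.
  by rewrite sum1_card -(cardsC1 (0 : F)); apply: eq_card => t; rewrite !inE.
rewrite (partition_big (fun t => t ^+ 2 / c) (mem (sqset c))); last first.
  move=> t ht; rewrite !inE mulf_neq0 ?expf_neq0 ?invr_eq0 //=.
  by apply/existsP; exists t; rewrite mulrC divfK.
rewrite -sum1_card -muln2 big_distrl /=; apply: eq_bigr => m.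
rewrite inE => /andP[hm /existsP[t0 /eqP ht0]].
have t0n : t0 != 0.
  by apply: contraNneq (mulf_neq0 hc hm) => e; rewrite -ht0 e expr0n.
rewrite mul1n.
transitivity #|[set t | t ^+ 2 == c * m]|; first by rewrite (roots2 t0n ht0).
rewrite -sum1_card; apply: eq_bigl => t; rewrite !inE; apply/esym.
apply/andP/eqP => [[_ /eqP <-]|e]; first by rewrite mulrC divfK.
split; last by rewrite e mulrC mulKf.
by apply: contraNneq (mulf_neq0 hc hm) => e0; rewrite -e e0 expr0n.
Qed.

Lemma nsq_count (c : F) : c != 0 -> #|nsqset c| = #|sqset c|.
Proof.
move=> hc.
have := cardsID [set m : F | [exists t, t ^+ 2 == c * m]] [set m : F | m != 0].
have -> : [set m : F | m != 0] :&: [set m | [exists t, t ^+ 2 == c * m]] = sqset c.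
  by apply/setP => m; rewrite !inE.
have -> : [set m : F | m != 0] :\: [set m | [exists t, t ^+ 2 == c * m]] = nsqset c.
  by apply/setP => m; rewrite !inE andbC.
have -> : #|[set m : F | m != 0]| = #|F|.-1.
  by rewrite -(cardsC1 (0 : F)); apply: eq_card => t; rewrite !inE.
rewrite -(sq_count hc) -addnn => /eqP; rewrite eqn_add2l => /eqP.
done.
Qed.

Lemma sq_half (c : F) : c != 0 -> #|sqset c| = (#|F|.-1)./2.
Proof. by move=> hc; rewrite -(sq_count hc) doubleK. Qed.


Lemma rv4_inj x0 x1 x2 x3 y0 y1 y2 y3 :
  rv4 x0 x1 x2 x3 = rv4 y0 y1 y2 y3 -> [/\ x0 = y0, x1 = y1, x2 = y2 & x3 = y3].
Proof.
move=> e.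
have := congr1 (fun v : 'rV[F]_4 => v 0 (@Ordinal 4 0 isT)) e.
have := congr1 (fun v : 'rV[F]_4 => v 0 (@Ordinal 4 1 isT)) e.
have := congr1 (fun v : 'rV[F]_4 => v 0 (@Ordinal 4 2 isT)) e.
have := congr1 (fun v : 'rV[F]_4 => v 0 (@Ordinal 4 3 isT)) e.
by rewrite !mxE /= => -> -> -> ->.
Qed.

Lemma rv4_lin a b x0 x1 x2 x3 y0 y1 y2 y3 :
  a *: rv4 x0 x1 x2 x3 + b *: rv4 y0 y1 y2 y3 =
  rv4 (a * x0 + b * y0) (a * x1 + b * y1) (a * x2 + b * y2) (a * x3 + b * y3).
Proof. by rowcomp. Qed.

Lemma rv4_scale a x0 x1 x2 x3 :
  a *: rv4 x0 x1 x2 x3 = rv4 (a * x0) (a * x1) (a * x2) (a * x3).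
Proof. by rowcomp. Qed.

Lemma rv4_0 : rv4 0 0 0 0 = 0.
Proof. by rowcomp. Qed.

Lemma rv4_neq0 x0 x1 x2 x3 : rv4 x0 x1 x2 x3 != 0 ->
  [|| x0 != 0, x1 != 0, x2 != 0 | x3 != 0].
Proof.
apply: contraR; rewrite !negb_or !negbK => /and4P[/eqP-> /eqP-> /eqP-> /eqP->].
by rewrite rv4_0.
Qed.

Lemma nz_row m (A : 'M[F]_(m,4)) : A != 0 -> exists i, row i A != 0.
Proof.
move=> nA; apply/existsP; apply: contraR nA; rewrite negb_exists => /forallP h.
by apply/eqP/row_matrixP => i; rewrite row0; apply/eqP; rewrite -[_ == _]negbK h.
Qed.

Lemma nz_entry m n (A : 'M[F]_(m,n)) : A != 0 -> exists i j, A i j != 0.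
Proof.
move=> nA; have : [exists i, exists j, A i j != 0].
  apply: contraR nA; rewrite negb_exists => /forallP h.
  apply/eqP/matrixP => i j; rewrite mxE; apply/eqP.
  by move: (h i); rewrite negb_exists => /forallP/(_ j); rewrite negbK.
by case/existsP => i /existsP[j hj]; exists i, j.
Qed.

Lemma rank_rv (v : 'rV[F]_4) : v != 0 -> \rank v = 1%N.
Proof.
move=> nv; apply/eqP; rewrite eqn_leq rank_leq_row lt0n mxrank_eq0 nv //.
Qed.

Lemma point_gen (v : 'rV[F]_4) : v != 0 -> <<v>>%MS \in points F.
Proof.
move=> nv; rewrite inE; apply/andP; split; first exact: canon_gen.
by rewrite genmxE rank_rv.
Qed.

Lemma point_row P : P \in points F -> exists2 v : 'rV[F]_4, v != 0 & P = <<v>>%MS.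
Proof.
rewrite inE => /andP[cP /eqP rP].
have nP : P != 0 by rewrite -mxrank_eq0 rP.
have [i ni] := nz_row nP.
exists (row i P) => //; symmetry; apply: canon_eq => //; first exact: canon_gen.
  by rewrite genmxE row_sub.
by rewrite rP genmxE rank_rv.
Qed.

Definition pt (m : F) : 'M[F]_4 := <<rv4 0 1 0 m>>%MS.

Lemma pt_neq0 m : rv4 0 1 0 m != 0.
Proof.
by apply/eqP => /(congr1 (fun v : 'rV[F]_4 => v 0 (@Ordinal 4 1 isT))); rewrite !mxE /=; apply/eqP; rewrite oner_eq0.
Qed.

Lemma pt_point m : pt m \in points F.
Proof. exact: point_gen (pt_neq0 m). Qed.

Lemma sub_gen_rv (v w : 'rV[F]_4) : (v <= <<w>>)%MS -> exists a, v = a *: w.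
Proof.
rewrite genmxE => /submxP[D ->]; exists (D 0 0).
by rewrite {1}[D]mx11_scalar mul_scalar_mx.
Qed.

Lemma sub_col2 (v a b : 'rV[F]_4) : (v <= <<col_mx a b>>)%MS ->
  exists al be, v = al *: a + be *: b.
Proof.
rewrite genmxE => /submxP[D ->]; exists (lsubmx D 0 0), (rsubmx D 0 0).
rewrite -[D]hsubmxK mul_row_col.
rewrite {1}[lsubmx D]mx11_scalar {1}[rsubmx D]mx11_scalar !mul_scalar_mx. by rewrite row_mxKl row_mxKr.
Qed.

Lemma pt_l0 m : (pt m <= l0)%MS.
Proof. by rewrite /pt genmxE sub_l0_rv !eqxx. Qed.

Lemma points_l0 P : P \in points F -> (P <= l0)%MS -> P = cpt None \/ exists m, P = pt m.
Proof.
move=> /point_row[v nv ->]; rewrite genmxE.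
move: nv; rewrite [v]rv4E; move: (v 0 0) (v 0 1) (v 0 2) (v 0 3) => x0 x1 x2 x3 nv.
rewrite sub_l0_rv.
case/andP=> /eqP e0 /eqP e2; subst x0 x2.
have [e1|e1] := eqVneq x1 0.
  subst x1; left; rewrite cptE /= cvec_infE.
  have x3n : x3 != 0 by move: (rv4_neq0 nv); rewrite !eqxx.
  apply: (gen_scale x3n); rewrite rv4_scale; congr rv4; ring.
right; exists (x3 / x1); rewrite /pt; apply: (gen_scale e1).
rewrite rv4_scale; congr rv4; by field.
Qed.


Lemma card_opt (Q : pred (option F)) : Q None ->
  #|[set t | Q t]| = (#|[set t : F | Q (Some t)]|).+1.
Proof.
move=> qN.
have -> : [set t | Q t] = None |: (Some @: [set t : F | Q (Some t)]).
  apply/setP => -[t|]; rewrite !inE ?qN //=.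
  apply/idP/imsetP => [qt|[u]]; first by exists t; rewrite ?inE.
  by rewrite inE => qu [->].
rewrite cardsU1 card_imset; last exact: Some_inj.
by case: imsetP => // -[u _].
Qed.

Lemma roots_card (c m : F) : c != 0 ->
  #|[set t : F | t ^+ 2 == c * m]| =
  if m == 0 then 1%N else if m \in sqset c then 2%N else 0%N.
Proof.
move=> hc; have [-> | m0] := eqVneq m 0.
  have -> : [set t : F | t ^+ 2 == c * 0] = [set 0].
    by apply/setP => t; rewrite !inE mulr0 sqrf_eq0.
  by rewrite cards1.
case: ifP => hs.
  move: hs; rewrite inE => /andP[_ /existsP[t0 /eqP ht0]].
  have t0n : t0 != 0.
    by apply: contraNneq (mulf_neq0 hc m0) => e; rewrite -ht0 e expr0n.
  exact: roots2 t0n ht0.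
apply/eqP; rewrite cards_eq0; apply/eqP/setP => t; rewrite !inE.
apply/negP => ht; move/negbT: hs; rewrite inE m0 /=; apply/negP; rewrite negbK; apply/existsP; by exists t.
Qed.

Definition c3 : F := - (3%:R)^-1.
Lemma c3_neq0 : c3 != 0.
Proof. by rewrite oppr_eq0 invr_eq0. Qed.

Lemma nosc_set (P : 'M[F]_4) : [set H in oscs F | incid P H] = (@osc F) @: [set t | (P <= osc t)%MS].
Proof.
apply/setP => H; rewrite !inE; apply/andP/imsetP => [[/imsetP[t _ ->] Pt]|[t]].
  by exists t; rewrite ?inE.
by rewrite inE => Pt ->; split; [exact: imset_f|].
Qed.

Lemma nosc_pt m : nosc (pt m) = (#|[set t : F | t ^+ 2 == c3 * m]|).+1.
Proof.
rewrite /nosc nosc_set card_imset; last exact: osc_inj.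
rewrite (card_opt (Q := fun t => (pt m <= osc t)%MS)); last first.
  by rewrite /pt genmxE osc_None_rv.
congr (_.+1); apply: eq_card => t; rewrite !inE /pt genmxE sub_osc vosc.
have -> : - t ^+ 3 * 0 + 3%:R * t ^+ 2 * 1 - 3%:R * t * 0 + m = 3%:R * (t ^+ 2 - c3 * m).
  by rewrite /c3; field.
by rewrite mulf_eq0 (negbTE h3) subr_eq0.
Qed.

Lemma nosc_pt3 m : (nosc (pt m) == 3%N) = (m \in sqset c3).
Proof.
rewrite nosc_pt roots_card ?c3_neq0 //.
have [->|m0] := eqVneq m 0; first by rewrite inE eqxx.
by case: ifP.
Qed.

Lemma nosc_pt1 m : (nosc (pt m) == 1%N) = (m \in nsqset c3).
Proof.
rewrite nosc_pt roots_card ?c3_neq0 //.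
have [->|m0] := eqVneq m 0; first by rewrite inE eqxx.
move: (m0); rewrite !inE => -> /=. by case: ifP.
Qed.

Lemma pt_sub_inv m n : (rv4 0 1 0 m <= pt n)%MS -> m = n.
Proof.
case/sub_gen_rv => a; rewrite rv4_scale => /rv4_inj[_ e1 _ e3].
by rewrite e3 -[a]mulr1 -e1 mul1r.
Qed.

Lemma pt_inj : injective pt.
Proof.
move=> m n e; apply: pt_sub_inv; rewrite -e /pt genmxE; exact: submx_refl.
Qed.

Lemma pt_curve m : pt m \notin curve F.
Proof.
apply/imsetP => -[t _ e].
have : (cpt t <= osc None)%MS by rewrite -e; exact: submx_trans (pt_l0 m) l0_osc.
rewrite cpt_osc => /eqP et; subst t.
have : (rv4 0 1 0 m <= cpt None)%MS by rewrite -e /pt genmxE submx_refl.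
rewrite cptE /= cvec_infE => /sub_gen_rv[a]; rewrite rv4_scale => /rv4_inj[_ e1 _ _].
by move/eqP: e1; rewrite mulr0 oner_eq0.
Qed.

Lemma pt_tangent m t : (pt m <= tangent t)%MS -> m = 0.
Proof.
rewrite /pt genmxE tangentE => /sub_col2[al [be]].
case: t => [t|] /=; rewrite ?cvecE ?dcvecE ?cvec_infE ?dcvec_infE rv4_lin.
  case/rv4_inj => e0 e1 e2 e3.
  have ea : al = 0 by rewrite [RHS]e0 mulr1 mulr0 addr0.
  subst al; move: e1 e2 e3; rewrite !mul0r !add0r mulr1 => <- e2 ->.
  have : 2%:R * t = 0 by rewrite e2 mul1r.
  move/eqP; rewrite mulf_eq0 (negbTE h2) /= => /eqP ->.
  by rewrite expr0n /= !mulr0.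
case/rv4_inj => _ e1 _ _; move/eqP: e1.
by rewrite !mulr0 addr0 oner_eq0.
Qed.

Lemma pt0_tangent : (pt 0 <= tangent (Some 0))%MS.
Proof.
rewrite /pt tangentE !genmxE /=.
have -> : rv4 0 1 0 0 = dcvec (0 : F) by rewrite dcvecE mulr0 expr0n /= mulr0.
exact: sub_colmx_r.
Qed.


Lemma pt_subsp m : is_subsp 1 (pt m).
Proof. by have := pt_point m; rewrite inE. Qed.

Lemma cptN_curve : cpt None \in curve F.
Proof. exact: imset_f. Qed.

Lemma PC2_l0 : [set P in PC2 F | incid P l0] = [set pt 0].
Proof.
apply/setP => P; rewrite !inE; apply/idP/eqP => [/andP[/and3P[pP nP /existsP[t Pt]] Pl]|->].
  have pP' : P \in points F by rewrite inE.
  case: (points_l0 pP' Pl) => [eP|[m eP]]; first by move: nP; rewrite eP cptN_curve.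
  by subst P; rewrite (pt_tangent Pt).
rewrite pt_subsp pt_curve /incid pt_l0 andbT /=.
by apply/existsP; exists (Some 0); exact: pt0_tangent.
Qed.

Lemma PCk_l0 k (X : {set F}) : (forall m, (nosc (pt m) == k) = (m \in X)) ->
  [set P in [set P in points F | (P \notin curve F) && (nosc P == k)] | incid P l0]
   = pt @: X.
Proof.
move=> hX; apply/setP => P; rewrite !inE.
apply/idP/imsetP => [/andP[/and3P[pP nP kP] Pl]|[m mX ->]].
  have pP' : P \in points F by rewrite inE.
  case: (points_l0 pP' Pl) => [eP|[m eP]]; first by move: nP; rewrite eP cptN_curve.
  by subst P; exists m => //; rewrite -hX.
by rewrite pt_subsp pt_curve hX mX /incid pt_l0.
Qed.

Lemma PC5_l0 : [set P in PC5 F | incid P l0] = set0.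
Proof.
apply/setP => P; rewrite !inE; apply/negP => /andP[/andP[_ /eqP n0] Pl].
have : (0 < nosc P)%N.
  rewrite /nosc card_gt0; apply/set0Pn; exists (osc None).
  by rewrite inE imset_f //= /incid (submx_trans Pl l0_osc).
by rewrite n0.
Qed.

Lemma OD0_l0 : OD0 l0 = [:: 1%N; 1%N; (#|F|.-1)./2; (#|F|.-1)./2; 0%N].
Proof.
rewrite /OD0 /= /PC1 curve_l0 cards1 PC2_l0 cards1.
rewrite (PCk_l0 nosc_pt3) (PCk_l0 nosc_pt1) PC5_l0 cards0.
rewrite !card_imset; try exact: pt_inj.
by rewrite nsq_count ?c3_neq0 // sq_half ?c3_neq0.
Qed.


Definition cw4 (y0 y1 y2 y3 : F) : 'cV[F]_4 :=
  \col_(i < 4) nth 0 [:: y0; y1; y2; y3] i.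

Lemma cw4E (w : 'cV[F]_4) : w = cw4 (w 0 0) (w 1 0) (w 2 0) (w 3 0).
Proof.
apply/colP; case=> [[|[|[|[|?]]]] ?]; rewrite mxE //=; by congr (w _ _); apply: val_inj.
Qed.

Lemma cw4_0 : cw4 0 0 0 0 = 0.
Proof. by colcomp. Qed.

Lemma rv_cw x0 x1 x2 x3 y0 y1 y2 y3 :
  (rv4 x0 x1 x2 x3 *m cw4 y0 y1 y2 y3 == 0) = (x0 * y0 + x1 * y1 + x2 * y2 + x3 * y3 == 0).
Proof.
rewrite mx11_eq0 !mxE !big_ord_recl !big_ord0 !mxE /= /bump /=.
by congr (_ == _); ring.
Qed.

Lemma osc_NoneE : osc_fun (None : option F) = cw4 1 0 0 0.
Proof. by colcomp. Qed.

Lemma rank_kerw (w : 'cV[F]_4) : w != 0 -> \rank <<kermx w>>%MS = 3%N.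
Proof.
move=> nw; rewrite genmxE mxrank_ker.
suff -> : \rank w = 1%N by [].
by apply/eqP; rewrite eqn_leq rank_leq_col lt0n mxrank_eq0 nw.
Qed.

Lemma plane_ker H : H \in planes F -> exists2 w : 'cV[F]_4, w != 0 & H = <<kermx w>>%MS.
Proof.
rewrite inE => /andP[cH /eqP rH].
have nK : cokermx H != 0 by rewrite -mxrank_eq0 mxrank_coker rH.
have [i [j hij]] := nz_entry nK.
have nw : col j (cokermx H) != 0.
  by apply/eqP => e; move/eqP: hij; apply; have := congr1 (fun M : 'cV[F]_4 => M i 0) e; rewrite !mxE.
exists (col j (cokermx H)) => //.
apply: canon_eq => //; first exact: canon_gen.
  by rewrite genmxE sub_kermx colE mulmxA mulmx_coker mul0mx.
by rewrite rank_kerw // rH.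
Qed.

Lemma ker_eq (w w' : 'cV[F]_4) :
  (forall x0 x1 x2 x3, (rv4 x0 x1 x2 x3 *m w == 0) = (rv4 x0 x1 x2 x3 *m w' == 0)) ->
  <<kermx w>>%MS = <<kermx w'>>%MS.
Proof.
move=> h; apply: eq_genmx; apply/eqmxP; apply/andP; split; apply: rowsP => v;
  by rewrite [v]rv4E !sub_kermx h.
Qed.

Definition hp (l : F) : 'M[F]_4 := <<kermx (cw4 l 0 (-1) 0)>>%MS.

Lemma cw_hp_neq0 l : cw4 l 0 (-1) 0 != 0.
Proof.
apply/eqP => /(congr1 (fun M : 'cV[F]_4 => M (@Ordinal 4 2 isT) 0)); rewrite !mxE /=.
by apply/eqP; rewrite oppr_eq0 oner_eq0.
Qed.

Lemma sub_ker_rv x0 x1 x2 x3 (w : 'cV[F]_4) :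
  (rv4 x0 x1 x2 x3 <= <<kermx w>>)%MS = (rv4 x0 x1 x2 x3 *m w == 0).
Proof. by rewrite genmxE sub_kermx. Qed.

Lemma osc_None_ker : osc None = <<kermx (cw4 1 0 0 0)>>%MS.
Proof. by rewrite /osc osc_NoneE. Qed.

Lemma planes_l0 H : H \in planes F -> (l0 <= H)%MS ->
  H = osc None \/ exists l, H = hp l.
Proof.
case/plane_ker => w; rewrite [w]cw4E.
move: (w 0 0) (w 1 0) (w 2 0) (w 3 0) => y0 y1 y2 y3 nw -> lH.
have e1 : y1 = 0.
  have : (rv4 0 1 0 0 <= <<kermx (cw4 y0 y1 y2 y3)>>)%MS.
    by apply: submx_trans lH; rewrite sub_l0_rv !eqxx.
  by rewrite sub_ker_rv rv_cw => /eqP <-; ring.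
have e3 : y3 = 0.
  have : (rv4 0 0 0 1 <= <<kermx (cw4 y0 y1 y2 y3)>>)%MS.
    by apply: submx_trans lH; rewrite sub_l0_rv !eqxx.
  by rewrite sub_ker_rv rv_cw => /eqP <-; ring.
subst y1 y3.
have [e2|e2] := eqVneq y2 0.
  subst y2; left.
  have y0n : y0 != 0 by apply: contraNneq nw => ->; rewrite cw4_0.
  rewrite osc_None_ker; apply: ker_eq => x0 x1 x2 x3; rewrite !rv_cw.
  have -> : x0 * y0 + x1 * 0 + x2 * 0 + x3 * 0 = x0 * y0 by ring.
  have -> : x0 * 1 + x1 * 0 + x2 * 0 + x3 * 0 = x0 by ring.
  by rewrite mulf_eq0 (negbTE y0n) orbF.
right; exists (- y0 / y2); rewrite /hp; apply: ker_eq => x0 x1 x2 x3; rewrite !rv_cw.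
have -> : x0 * y0 + x1 * 0 + x2 * y2 + x3 * 0 =
  (- y2) * (x0 * (- y0 / y2) + x1 * 0 + x2 * -1 + x3 * 0) by field.
by rewrite mulf_eq0 oppr_eq0 (negbTE e2).
Qed.

Lemma hp_plane l : hp l \in planes F.
Proof.
rewrite inE; apply/andP; split; first exact: canon_gen.
by rewrite rank_kerw // cw_hp_neq0.
Qed.

Lemma hp_subsp l : is_subsp 3 (hp l).
Proof. by have := hp_plane l; rewrite inE. Qed.

Lemma l0_hp l : (l0 <= hp l)%MS.
Proof.
apply: rowsP => v /rv4_sub_l0 ->; rewrite /hp sub_ker_rv rv_cw.
by apply/eqP; ring.
Qed.

Lemma hp_inj : injective hp.
Proof.
move=> l m e.
have : (rv4 1 0 l 0 <= hp m)%MS by rewrite -e /hp sub_ker_rv rv_cw; apply/eqP; ring.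
rewrite /hp sub_ker_rv rv_cw => /eqP h.
have : m - l = 0 by rewrite -[RHS]h; ring.
by move/eqP; rewrite subr_eq0 => /eqP.
Qed.

Lemma cv_l0 : (cv None <= l0)%MS.
Proof. by rewrite /= cvec_infE sub_l0_rv !eqxx. Qed.

Lemma osc_l0 t : (l0 <= osc t)%MS -> t = None.
Proof.
move=> h; have := submx_trans cv_l0 h.
by rewrite -genmxE -cptE cpt_osc => /eqP <-.
Qed.

Lemma hp_oscs l : hp l \notin oscs F.
Proof.
apply/imsetP => -[t _ e].
have := l0_hp l; rewrite e => /osc_l0 et; subst t.
have : (rv4 0 0 1 0 <= hp l)%MS by rewrite e osc_None_rv.
by rewrite /hp sub_ker_rv rv_cw; apply/negP; rewrite (_ : _ + _ = -1); [rewrite oppr_eq0 oner_eq0|ring].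
Qed.

Lemma ncurve_set (S : 'M[F]_4) : ncurve S = #|[set t | (cpt t <= S)%MS]|.
Proof.
rewrite /ncurve -(card_imset _ (@cpt_inj)); apply: eq_card => P; rewrite !inE.
apply/andP/imsetP => [[/imsetP[t _ ->] tS]|[t]]; first by exists t; rewrite ?inE.
by rewrite inE => tS ->; split; [exact: imset_f|].
Qed.

Lemma ncurve_hp l : ncurve (hp l) = (#|[set t : F | t ^+ 2 == 1 * l]|).+1.
Proof.
rewrite ncurve_set (card_opt (Q := fun t => (cpt t <= hp l)%MS)); last first.
  by rewrite cptE /hp /= cvec_infE !genmxE sub_kermx rv_cw; apply/eqP; ring.
congr (_.+1); apply: eq_card => t; rewrite !inE cptE /hp /= cvecE !genmxE sub_kermx rv_cw.
have -> : 1 * l + t * 0 + t ^+ 2 * -1 + t ^+ 3 * 0 = - (t ^+ 2 - 1 * l) by ring.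
by rewrite oppr_eq0 subr_eq0.
Qed.

Lemma ncurve_oscN : ncurve (osc (None : option F)) = 1%N.
Proof.
rewrite ncurve_set (_ : [set t | _] = [set None]) ?cards1 //.
by apply/setP => t; rewrite !inE cpt_osc.
Qed.


Lemma ncurve_hp_eq l : ncurve (hp l) =
  if l == 0 then 2%N else if l \in sqset 1 then 3%N else 1%N.
Proof.
rewrite ncurve_hp roots_card ?oner_neq0 //.
by case: (l == 0) => //; case: (l \in sqset 1).
Qed.

Lemma HC1_l0 : [set H in HC1 F | incid l0 H] = [set osc None].
Proof.
apply/setP => H; rewrite !inE; apply/andP/eqP => [[/imsetP[t _ ->] /osc_l0 -> //]|->].
by split; [exact: imset_f|exact: l0_osc].
Qed.

Lemma HCk_l0 k (X : {set F}) : (forall l, (ncurve (hp l) == k) = (l \in X)) ->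
  (ncurve (osc (None : option F)) == k) = false ->
  [set H in [set H in planes F | ncurve H == k] | incid l0 H] = hp @: X.
Proof.
move=> hX hN; apply/setP => H; rewrite !inE.
apply/idP/imsetP => [/andP[/andP[pH kH] lH]|[l lX ->]].
  have pH' : H \in planes F by rewrite inE.
  case: (planes_l0 pH' lH) => [eH|[l eH]]; first by move: kH; rewrite eH hN.
  by subst H; exists l => //; rewrite -hX.
by rewrite hp_subsp hX lX /incid l0_hp.
Qed.

Lemma HC4_l0 : [set H in HC4 F | incid l0 H] = hp @: nsqset 1.
Proof.
apply/setP => H; rewrite !inE.
apply/idP/imsetP => [/andP[/and3P[pH nH kH] lH]|[l lX ->]].
  have pH' : H \in planes F by rewrite inE.
  case: (planes_l0 pH' lH) => [eH|[l eH]].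
    by move: nH; rewrite eH imset_f.
  subst H; exists l => //; move: kH; rewrite ncurve_hp_eq.
  move: (l); rewrite /nsqset /sqset => l'; rewrite !inE.
  by case: (l' == 0) => //=; case: [exists t, _].
rewrite hp_subsp hp_oscs /incid l0_hp ncurve_hp_eq andbT.
by move: lX; rewrite !inE => /andP[/negbTE -> /negbTE ->].
Qed.

Lemma OD2_l0 : OD2 l0 = [:: 1%N; 1%N; (#|F|.-1)./2; (#|F|.-1)./2; 0%N].
Proof.
rewrite /OD2 /= HC1_l0 cards1.
rewrite (@HCk_l0 2 [set 0]); first last.
- by rewrite ncurve_oscN.
- by move=> l; rewrite ncurve_hp_eq !inE; case: (l == 0) => //; case: ifP.
rewrite (@HCk_l0 3 (sqset 1)); first last.
- by rewrite ncurve_oscN.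
- move=> l; rewrite ncurve_hp_eq; have [->|l0n] := eqVneq l 0; first by rewrite !inE eqxx.
  by case: ifP.
rewrite HC4_l0.
rewrite (@HCk_l0 0 set0); first last.
- by rewrite ncurve_oscN.
- by move=> l; rewrite ncurve_hp_eq in_set0; case: ifP => //; case: ifP.
rewrite !(card_imset _ hp_inj).
by rewrite cards1 cards0 nsq_count ?oner_neq0 // sq_half ?oner_neq0.
Qed.

End Main.
Unset Implicit Arguments.

Lemma char_neq (F : finFieldType) (p k : nat) : p \in [pchar F] -> prime k -> p != k ->
  (k%:R : F) != 0.
Proof.
move=> hp pk pk'; apply/negP => /eqP h.
have : k \in [pchar F] by rewrite inE pk h eqxx.
rewrite (pcharf_eq hp) => /eqP ek.
by move: pk'; rewrite ek eqxx.
Qed.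

Theorem mainTheorem3 (F : finFieldType) (p : nat)
    (hp : p \in [pchar F]) (hp2 : p != 2%N) (hp3 : p != 3%N) :
  (exists2 l0, l0 \in L3 F & L3 F = [set gact g l0 | g in Gset F]) /\
  (forall l, l \in L3 F ->
     OD2 l = OD0 l /\
     OD0 l = [:: 1%N; 1%N; (#|F|.-1)./2; (#|F|.-1)./2; 0%N]).
Proof.
have h2 : (2%:R : F) != 0 by apply: char_neq hp _ hp2.
have h3 : (3%:R : F) != 0 by apply: char_neq hp _ hp3.
split.
  exists (l0 F); first exact: l0_L3.
  apply/setP => l; apply/idP/imsetP => [/(L3_orbit h2) [g hg ->]|[g hg ->]].
    by exists g.
  exact: L3_gact (l0_L3 F).
move=> l /(L3_orbit h2) [g hg ->].
rewrite OD2_gact ?OD0_gact ?canon_l0 // OD0_l0 // OD2_l0 //.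
Qed.
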